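(* Let $F_1,\dots,F_l\in\mathfrak{M}_n^{+}$ satisfy $\sum_{j=1}^l F_j=I_n$, let $R\in\mathfrak{M}_n^{+}$ and $N\in\mathbb{N}$. Then \[ \sum_{k_1,\dots,k_N}\big\|F_{k_1}e^{R/N}F_{k_2}e^{R/N}\cdots F_{k_N}e^{R/N}\big\|\le n\,\|e^{R}\|, \] where the sum is over all $(k_1,\dots,k_N)\in\{1,\dots,l\}^N$.
   Context: $\mathfrak{M}_n^{+}$ is the set of $n\times n$ matrices all of whose entries are non-negative real numbers; $I_n$ is the identity matrix; $\|\cdot\|$ is the operator norm. *)

(* Defs.v *)
(* real n x n matrices as functions nat -> nat -> R,
   only entries with indices < n are meaningful. *)
From Stdlib Require Import Reals Lra List Arith Factorial Classical ClassicalEpsilon.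
Open Scope R_scope.

Definition mat := nat -> nat -> R.
Definition vec := nat -> R.

Fixpoint rsum (k : nat) (f : nat -> R) : R :=
  match k with
  | O => 0
  | S k' => rsum k' f + f k'
  end.

Definition mat_id : mat := fun i j => if Nat.eq_dec i j then 1 else 0.
Definition mat_mul (n : nat) (A B : mat) : mat :=
  fun i j => rsum n (fun k => A i k * B k j).
Definition mat_scale (c : R) (A : mat) : mat := fun i j => c * A i j.
Fixpoint mat_pow (n : nat) (A : mat) (k : nat) : mat :=
  match k with
  | O => mat_id
  | S k' => mat_mul n A (mat_pow n A k')
  end.

Definition nonneg_mat (n : nat) (A : mat) : Prop :=
  forall i j, (i < n)%nat -> (j < n)%nat -> 0 <= A i j.

Definition mat_exp (n : nat) (A : mat) : mat :=
  fun i j => epsilon (inhabits 0)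
    (fun s => infinite_sum (fun k => mat_pow n A k i j / INR (fact k)) s).

Definition vnorm (n : nat) (x : vec) : R := sqrt (rsum n (fun i => x i ^ 2)).
Definition mat_vec (n : nat) (A : mat) (x : vec) : vec :=
  fun i => rsum n (fun j => A i j * x j).
Definition opnorm (n : nat) (A : mat) : R :=
  epsilon (inhabits 0)
    (is_lub (fun r => exists x : vec, vnorm n x <= 1 /\ r = vnorm n (mat_vec n A x))).

Fixpoint word_prod (n : nat) (F : nat -> mat) (E : mat) (ks : list nat) : mat :=
  match ks with
  | nil => mat_id
  | k :: ks' => mat_mul n (mat_mul n (F k) E) (word_prod n F E ks')
  end.

(* sum of g over all words (k1,...,kN) in {0,...,l-1}^N *)
Fixpoint sum_words (l N : nat) (g : list nat -> R) : R :=
  match N with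
  | O => g nil
  | S N' => rsum l (fun k => sum_words l N' (fun ks => g (k :: ks)))
  end.

(* Main.v *)
Require Import Defs.
From Stdlib Require Import Reals Lra Lia List Arith Factorial Classical ClassicalEpsilon.
Open Scope R_scope.

Lemma rsum_ext m f g : (forall k, (k < m)%nat -> f k = g k) -> rsum m f = rsum m g.
Proof. induction m; simpl; intros H; auto. rewrite IHm; [rewrite H|]; auto; intros; apply H; lia. Qed.

Lemma rsum_le m f g : (forall k, (k < m)%nat -> f k <= g k) -> rsum m f <= rsum m g.
Proof. induction m; simpl; intros H; [lra|]. assert (f m <= g m) by (apply H; lia).
 assert (rsum m f <= rsum m g) by (apply IHm; intros; apply H; lia). lra. Qed.

Lemma rsum_nonneg m f : (forall k, (k < m)%nat -> 0 <= f k) -> 0 <= rsum m f.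
Proof. intros H. replace 0 with (rsum m (fun _ => 0)). apply rsum_le; auto.
 induction m; simpl; auto. rewrite IHm; [lra|]. intros; apply H; lia. Qed.

Lemma rsum_plus m f g : rsum m (fun k => f k + g k) = rsum m f + rsum m g.
Proof. induction m; simpl; [lra|]. rewrite IHm; lra. Qed.

Lemma rsum_scal m c f : rsum m (fun k => c * f k) = c * rsum m f.
Proof. induction m; simpl; [lra|]. rewrite IHm; lra. Qed.

Lemma rsum_scal_r m c f : rsum m (fun k => f k * c) = rsum m f * c.
Proof. induction m; simpl; [lra|]. rewrite IHm; lra. Qed.

Lemma rsum_const m c : rsum m (fun _ => c) = INR m * c.
Proof. induction m; [simpl; lra|]. cbn [rsum]. rewrite IHm, S_INR; lra. Qed.

Lemma rsum_swap m p f : rsum m (fun i => rsum p (fun j => f i j)) = rsum p (fun j => rsum m (fun i => f i j)).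
Proof. induction m; simpl. { induction p; simpl; auto. rewrite <- IHp; lra. }
 rewrite IHm, <- rsum_plus. auto. Qed.

Lemma rsum_mono_len m m' f : (m <= m')%nat -> (forall k, (k < m')%nat -> 0 <= f k) -> rsum m f <= rsum m' f.
Proof. intros Hm H. induction Hm; [lra|]. simpl. assert (0 <= f m0) by (apply H; lia).
 assert (rsum m f <= rsum m0 f) by (apply IHHm; intros; apply H; lia). lra. Qed.

Lemma rsum_elem m f k : (k < m)%nat -> (forall k, (k < m)%nat -> 0 <= f k) -> f k <= rsum m f.
Proof. revert k; induction m; intros k Hk H; [lia|]. simpl. destruct (Nat.eq_dec k m).
 - subst. assert (0 <= rsum m f) by (apply rsum_nonneg; intros; apply H; lia). lra.
 - assert (f k <= rsum m f) by (apply IHm; [lia| intros; apply H; lia]). assert (0 <= f m) by (apply H; lia). lra. Qed.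

Lemma sum_f_rsum f m : sum_f_R0 f m = rsum (S m) f.
Proof. induction m; [simpl; lra|]. cbn [sum_f_R0]. rewrite IHm. reflexivity. Qed.

Lemma rsum_S_l m f : rsum (S m) f = f 0%nat + rsum m (fun k => f (S k)).
Proof. induction m; [simpl; lra|]. cbn [rsum] in *. rewrite IHm. lra. Qed.

Lemma rsum_delta n i g : (i < n)%nat ->
  rsum n (fun k => (if Nat.eq_dec i k then 1 else 0) * g k) = g i.
Proof. induction n; intros Hi; [lia|]. cbn [rsum]. destruct (Nat.eq_dec i n).
 - subst. rewrite (rsum_ext _ _ (fun _ => 0)). rewrite rsum_const. lra.
   intros k Hk. destruct (Nat.eq_dec n k); [lia|lra].
 - rewrite IHn by lia. lra. Qed.

Lemma mat_id_l n X i j : (i < n)%nat -> mat_mul n mat_id X i j = X i j.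
Proof. intros; unfold mat_mul, mat_id. apply (rsum_delta n i (fun k => X k j)); auto. Qed.

Lemma mat_mul_assoc n X Y Z i j :
  mat_mul n (mat_mul n X Y) Z i j = mat_mul n X (mat_mul n Y Z) i j.
Proof. unfold mat_mul.
 rewrite (rsum_ext _ _ (fun m => rsum n (fun k => X i k * Y k m * Z m j))).
 2:{ intros; rewrite <- rsum_scal_r; auto. }
 rewrite rsum_swap. apply rsum_ext. intros k _. rewrite <- rsum_scal. apply rsum_ext; intros; lra. Qed.

Lemma mat_mul_ext_r n A X Y i j : (forall k, (k < n)%nat -> X k j = Y k j) ->
  mat_mul n A X i j = mat_mul n A Y i j.
Proof. intros H; unfold mat_mul; apply rsum_ext; intros k Hk; rewrite H; auto. Qed.

Lemma mat_mul_ext_l n A B X i j : (forall k, (k < n)%nat -> A i k = B i k) ->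
  mat_mul n A X i j = mat_mul n B X i j.
Proof. intros H; unfold mat_mul; apply rsum_ext; intros k Hk; rewrite H; auto. Qed.

Lemma matpow_add n A a b i j : (i < n)%nat ->
  mat_mul n (mat_pow n A a) (mat_pow n A b) i j = mat_pow n A (a + b) i j.
Proof. revert i j; induction a; intros i j Hi; simpl.
 - apply mat_id_l; auto.
 - rewrite mat_mul_assoc. apply mat_mul_ext_r. intros; apply IHa; auto. Qed.

Lemma nonneg_id n : nonneg_mat n mat_id.
Proof. intros i j _ _; unfold mat_id; destruct Nat.eq_dec; lra. Qed.

Lemma nonneg_mul n A B : nonneg_mat n A -> nonneg_mat n B -> nonneg_mat n (mat_mul n A B).
Proof. intros HA HB i j Hi Hj. apply rsum_nonneg; intros k Hk.
 apply Rmult_le_pos; auto. Qed.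

Lemma nonneg_pow n A k : nonneg_mat n A -> nonneg_mat n (mat_pow n A k).
Proof. intros H; induction k; simpl; [apply nonneg_id| apply nonneg_mul; auto]. Qed.

Lemma mul_mono_r n A X Y i j : (i < n)%nat -> nonneg_mat n A ->
  (forall k, (k < n)%nat -> X k j <= Y k j) -> mat_mul n A X i j <= mat_mul n A Y i j.
Proof. intros Hi HA H; unfold mat_mul; apply rsum_le; intros k Hk.
 apply Rmult_le_compat_l; auto. Qed.

Lemma pow_scale n A B c k i j : (forall i j, (i < n)%nat -> (j < n)%nat -> A i j = c * B i j) ->
  (i < n)%nat -> (j < n)%nat -> mat_pow n A k i j = c ^ k * mat_pow n B k i j.
Proof. intros H; revert i j; induction k; intros i j Hi Hj; simpl; [lra|].
 unfold mat_mul. rewrite <- rsum_scal. apply rsum_ext; intros m Hm.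
 rewrite H, IHk by auto. ring. Qed.

Lemma rsum_S m f : rsum (S m) f = rsum m f + f m.
Proof. reflexivity. Qed.

Lemma triangle Q (f : nat -> nat -> R) :
  rsum Q (fun d => rsum (S d) (fun a => f a (d - a)%nat)) =
  rsum Q (fun a => rsum (Q - a) (fun b => f a b)).
Proof. induction Q; [reflexivity|]. rewrite !(rsum_S Q). rewrite IHQ.
 rewrite (rsum_ext Q (fun a => rsum (S Q - a) (fun b => f a b))
   (fun a => rsum (Q - a) (fun b => f a b) + f a (Q - a)%nat)).
 2:{ intros a Ha. replace (S Q - a)%nat with (S (Q - a)) by lia. reflexivity. }
 rewrite rsum_plus. replace (S Q - Q)%nat with 1%nat by lia.
 replace (Q - Q)%nat with 0%nat by lia. simpl (rsum 1 _). lra. Qed.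

Definition TS n (B : mat) (c : R) (M : nat) : mat :=
  fun i j => rsum M (fun k => c ^ k / INR (fact k) * mat_pow n B k i j).

Lemma TS_mul n B c M P i j : (i < n)%nat ->
  mat_mul n (TS n B 1 M) (TS n B c P) i j =
  rsum M (fun a => rsum P (fun b => (1 ^ a / INR (fact a) * (c ^ b / INR (fact b))) * mat_pow n B (a + b) i j)).
Proof. intros Hi. unfold mat_mul, TS.
 rewrite (rsum_ext n _ (fun m => rsum M (fun a => rsum P (fun b =>
   (1 ^ a / INR (fact a) * (c ^ b / INR (fact b))) * (mat_pow n B a i m * mat_pow n B b m j))))).
 2:{ intros m Hm. rewrite <- rsum_scal_r. apply rsum_ext; intros a Ha.
     rewrite <- rsum_scal. apply rsum_ext; intros b Hb. ring. }
 rewrite rsum_swap. apply rsum_ext; intros a Ha. rewrite rsum_swap. apply rsum_ext; intros b Hb.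
 rewrite rsum_scal. rewrite <- (matpow_add n B a b i j Hi). reflexivity. Qed.

Lemma TS_binom n B c Q i j :
  TS n B (c + 1) Q i j =
  rsum Q (fun d => rsum (S d) (fun a => (fun a b => (1 ^ a / INR (fact a) * (c ^ b / INR (fact b))) * mat_pow n B (a + b) i j) a (d - a)%nat)).
Proof. unfold TS. apply rsum_ext; intros d Hd.
 replace (c + 1) with (1 + c) by ring. rewrite binomial, sum_f_rsum.
 unfold Rdiv at 1. rewrite <- !rsum_scal_r. apply rsum_ext; intros a Ha.
 replace (a + (d - a))%nat with d by lia. unfold C.
 assert (INR (fact a) <> 0) by apply INR_fact_neq_0.
 assert (INR (fact (d-a)) <> 0) by apply INR_fact_neq_0.
 assert (INR (fact d) <> 0) by apply INR_fact_neq_0.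
 field; auto. Qed.

Lemma TS_key n B c M P i j : nonneg_mat n B -> 0 <= c -> (i < n)%nat -> (j < n)%nat ->
  mat_mul n (TS n B 1 M) (TS n B c P) i j <= TS n B (c + 1) (M + P) i j.
Proof. intros HB Hc Hi Hj. rewrite TS_mul, TS_binom by auto.
 rewrite (triangle (M + P) (fun a b => (1 ^ a / INR (fact a) * (c ^ b / INR (fact b))) * mat_pow n B (a + b) i j)).
 assert (Hg : forall a b, 0 <= (1 ^ a / INR (fact a) * (c ^ b / INR (fact b))) * mat_pow n B (a + b) i j).
 { intros a b. apply Rmult_le_pos; [|apply nonneg_pow; auto].
   apply Rmult_le_pos; apply Rmult_le_pos; try (apply pow_le; lra);
   left; apply Rinv_0_lt_compat, INR_fact_lt_0. }
 apply Rle_trans with (rsum M (fun a => rsum (M + P - a) (fun b =>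
   (1 ^ a / INR (fact a) * (c ^ b / INR (fact b))) * mat_pow n B (a + b) i j))).
 - apply rsum_le; intros a Ha. apply rsum_mono_len; [lia|]. intros; apply Hg.
 - apply rsum_mono_len; [lia|]. intros; apply rsum_nonneg; intros; apply Hg. Qed.

Lemma TS_nonneg n B c M : nonneg_mat n B -> 0 <= c -> nonneg_mat n (TS n B c M).
Proof. intros HB Hc i j Hi Hj. apply rsum_nonneg; intros k Hk.
 apply Rmult_le_pos; [|apply nonneg_pow; auto]. apply Rmult_le_pos; [apply pow_le; auto|].
 left; apply Rinv_0_lt_compat, INR_fact_lt_0. Qed.

Lemma TS_pow n B M N i j : nonneg_mat n B -> (i < n)%nat -> (j < n)%nat ->
  mat_pow n (TS n B 1 M) N i j <= TS n B (INR N) (N * M + 1) i j.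
Proof. intros HB. revert i j; induction N; intros i j Hi Hj.
 - unfold TS; simpl. lra.
 - cbn [mat_pow]. eapply Rle_trans.
   + apply mul_mono_r; auto. apply TS_nonneg; auto; lra.
   + eapply Rle_trans. apply TS_key; auto. apply pos_INR.
     rewrite <- S_INR. replace (M + (N * M + 1))%nat with (S N * M + 1)%nat by (simpl; lia). lra. Qed.

Lemma cv_const c : Un_cv (fun _ => c) c.
Proof. intros eps He. exists 0%nat. intros. unfold R_dist. rewrite Rminus_diag, Rabs_R0. lra. Qed.

Lemma cv_rsum m (u : nat -> nat -> R) (l : nat -> R) :
  (forall k, (k < m)%nat -> Un_cv (u k) (l k)) ->
  Un_cv (fun M => rsum m (fun k => u k M)) (rsum m l).
Proof. induction m; intros H; simpl. apply cv_const.
 apply CV_plus. apply IHm; intros; apply H; lia. apply H; lia. Qed.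

Lemma cv_mul n (U V : nat -> mat) A C :
  (forall i j, (i < n)%nat -> (j < n)%nat -> Un_cv (fun M => U M i j) (A i j)) ->
  (forall i j, (i < n)%nat -> (j < n)%nat -> Un_cv (fun M => V M i j) (C i j)) ->
  forall i j, (i < n)%nat -> (j < n)%nat ->
  Un_cv (fun M => mat_mul n (U M) (V M) i j) (mat_mul n A C i j).
Proof. intros HU HV i j Hi Hj. unfold mat_mul.
 apply (cv_rsum n (fun k M => U M i k * V M k j) (fun k => A i k * C k j)).
 intros k Hk. apply CV_mult; auto. Qed.

Lemma cv_pow n (U : nat -> mat) A :
  (forall i j, (i < n)%nat -> (j < n)%nat -> Un_cv (fun M => U M i j) (A i j)) ->
  forall p i j, (i < n)%nat -> (j < n)%nat ->
  Un_cv (fun M => mat_pow n (U M) p i j) (mat_pow n A p i j).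
Proof. intros HU p. induction p; intros i j Hi Hj; simpl. apply cv_const.
 apply (cv_mul n U (fun M => mat_pow n (U M) p)); auto. Qed.

Lemma pow_bound n A a k i j : nonneg_mat n A -> 0 <= a ->
  (forall i j, (i < n)%nat -> (j < n)%nat -> A i j <= a) ->
  (i < n)%nat -> (j < n)%nat -> mat_pow n A k i j <= (INR n * a) ^ k.
Proof. intros HA Ha H. revert i j; induction k; intros i j Hi Hj; simpl.
 - unfold mat_id; destruct Nat.eq_dec; lra.
 - unfold mat_mul. replace (INR n * a * (INR n * a) ^ k) with (rsum n (fun _ => a * (INR n * a) ^ k)).
   2:{ rewrite rsum_const; ring. }
   apply rsum_le; intros m Hm. apply Rmult_le_compat; auto. apply nonneg_pow; auto. Qed.

Lemma exp_cv n A : nonneg_mat n A -> forall i j, (i < n)%nat -> (j < n)%nat ->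
  Un_cv (fun m => TS n A 1 (S m) i j) (mat_exp n A i j).
Proof. intros HA i j Hi Hj.
 set (a := rsum n (fun i => rsum n (fun j => A i j))).
 assert (Ha0 : 0 <= a) by (apply rsum_nonneg; intros; apply rsum_nonneg; intros; apply HA; auto).
 assert (Hab : forall i j, (i < n)%nat -> (j < n)%nat -> A i j <= a).
 { intros i' j' Hi' Hj'. apply Rle_trans with (rsum n (fun j => A i' j)).
   - apply (rsum_elem n (fun j => A i' j) j'); [auto| intros; apply HA; auto].
   - apply (rsum_elem n (fun i => rsum n (fun j => A i j)) i'); [auto|].
     intros; apply rsum_nonneg; intros; apply HA; auto. }
 assert (Hex : { l | Un_cv (fun m => sum_f_R0 (fun k => mat_pow n A k i j / INR (fact k)) m) l }).
 { apply Rseries_CV_comp with (Bn := fun k => / INR (fact k) * (INR n * a) ^ k).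
   - intros k. assert (0 < / INR (fact k)) by (apply Rinv_0_lt_compat, INR_fact_lt_0).
     pose proof (pow_bound n A a k i j HA Ha0 Hab Hi Hj).
     pose proof (nonneg_pow n A k HA i j Hi Hj). unfold Rdiv. split; [apply Rmult_le_pos; lra|].
     rewrite Rmult_comm. apply Rmult_le_compat_l; lra.
   - destruct (exist_exp (INR n * a)) as [l Hl]. exists l. exact Hl. }
 destruct Hex as [l Hl].
 assert (He : infinite_sum (fun k => mat_pow n A k i j / INR (fact k)) (mat_exp n A i j)).
 { unfold mat_exp. apply (epsilon_spec (inhabits 0) (fun s => infinite_sum (fun k => mat_pow n A k i j / INR (fact k)) s)).
   exists l. exact Hl. }
 intros eps Heps. destruct (He eps Heps) as [N0 HN]. exists N0. intros m Hm.
 specialize (HN m Hm). rewrite sum_f_rsum in HN. unfold TS.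
 rewrite (rsum_ext _ _ (fun k => mat_pow n A k i j / INR (fact k))). exact HN.
 intros; rewrite pow1; unfold Rdiv; ring. Qed.

Lemma exp_nonneg n A : nonneg_mat n A -> nonneg_mat n (mat_exp n A).
Proof. intros HA i j Hi Hj.
 apply Rle_cv_lim with (Un := fun _ => 0) (Vn := fun m => TS n A 1 (S m) i j).
 - intros m. apply TS_nonneg; auto; lra.
 - apply cv_const.
 - apply exp_cv; auto. Qed.

Lemma TS_le_exp n A M i j : nonneg_mat n A -> (i < n)%nat -> (j < n)%nat ->
  TS n A 1 (S M) i j <= mat_exp n A i j.
Proof. intros HA Hi Hj. apply (growing_ineq (fun m => TS n A 1 (S m) i j)).
 - intros m. unfold TS. cbn [rsum]. cbn [rsum] in *.
   assert (0 <= 1 ^ S m / INR (fact (S m)) * mat_pow n A (S m) i j).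
   { apply Rmult_le_pos; [|apply nonneg_pow; auto]. rewrite pow1. left; apply Rdiv_lt_0_compat; [lra|apply INR_fact_lt_0]. }
   lra.
 - apply exp_cv; auto. Qed.

Lemma expN_le n R N i j : nonneg_mat n R -> (1 <= N)%nat -> (i < n)%nat -> (j < n)%nat ->
  mat_pow n (mat_exp n (mat_scale (/ INR N) R)) N i j <= mat_exp n R i j.
Proof. intros HR HN Hi Hj. set (B := mat_scale (/ INR N) R).
 assert (HNp : 0 < INR N) by (apply lt_0_INR; lia).
 assert (HB : nonneg_mat n B).
 { intros a b Ha Hb. unfold B, mat_scale. apply Rmult_le_pos; auto. left; apply Rinv_0_lt_compat; auto. }
 assert (HRB : forall a b, (a < n)%nat -> (b < n)%nat -> R a b = INR N * B a b).
 { intros a b _ _. unfold B, mat_scale. field. lra. }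
 apply Rle_cv_lim with (Un := fun M => mat_pow n (TS n B 1 (S M)) N i j) (Vn := fun _ => mat_exp n R i j).
 - intros M. eapply Rle_trans. apply TS_pow; auto.
   replace (TS n B (INR N) (N * S M + 1) i j) with (TS n R 1 (S (N * S M)) i j).
   + apply TS_le_exp; auto.
   + replace (N * S M + 1)%nat with (S (N * S M)) by lia. unfold TS. apply rsum_ext; intros k _.
     rewrite (pow_scale n R B (INR N) k i j HRB Hi Hj). rewrite pow1. unfold Rdiv. ring.
 - apply (cv_pow n (fun M => TS n B 1 (S M))); auto. intros; apply exp_cv; auto.
 - apply cv_const. Qed.

Lemma vnorm_nonneg n x : 0 <= vnorm n x.
Proof. apply sqrt_pos. Qed.

Lemma sq_nonneg_sum n (x : vec) : 0 <= rsum n (fun i => x i ^ 2).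
Proof. apply rsum_nonneg; intros; apply pow2_ge_0. Qed.

Lemma coord_le n x j : (j < n)%nat -> Rabs (x j) <= vnorm n x.
Proof. intros Hj. rewrite <- sqrt_Rsqr_abs. unfold vnorm. apply sqrt_le_1_alt.
 unfold Rsqr. replace (x j * x j) with (x j ^ 2) by ring.
 apply (rsum_elem n (fun i => x i ^ 2) j); auto. intros; apply pow2_ge_0. Qed.

Lemma sumsq_le_l1 n (y : vec) : rsum n (fun i => y i ^ 2) <= (rsum n (fun i => Rabs (y i))) ^ 2.
Proof. induction n; simpl; [lra|].
 assert (0 <= rsum n (fun i => Rabs (y i))) by (apply rsum_nonneg; intros; apply Rabs_pos).
 assert (Rabs (y n) * Rabs (y n) = y n * y n) by (rewrite <- Rabs_mult; apply Rabs_right; nra).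
 assert (0 <= Rabs (y n)) by apply Rabs_pos. simpl in IHn. nra. Qed.

Lemma vnorm_le_l1 n y : vnorm n y <= rsum n (fun i => Rabs (y i)).
Proof. unfold vnorm. rewrite <- (sqrt_pow2 (rsum n (fun i => Rabs (y i)))).
 apply sqrt_le_1_alt, sumsq_le_l1. apply rsum_nonneg; intros; apply Rabs_pos. Qed.

Lemma cauchy_schwarz n (y : vec) : (rsum n y) ^ 2 <= INR n * rsum n (fun i => y i ^ 2).
Proof. induction n; [simpl; lra|]. cbn [rsum]. rewrite S_INR.
 set (S := rsum n y) in *. set (Q := rsum n (fun i => y i ^ 2)) in *. simpl in IHn.
 assert (0 <= INR n) by apply pos_INR.
 assert (H2 : 2 * S * y n <= Q + INR n * y n ^ 2).
 { destruct (Req_dec (INR n) 0) as [E|E].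
   - rewrite E in IHn. assert (S = 0) by nra. subst S. rewrite H0. assert (0 <= Q) by apply sq_nonneg_sum. nra.
   - assert (0 < INR n) by lra. assert (0 <= (INR n * y n - S) ^ 2) by apply pow2_ge_0.
     assert (INR n * (2 * S * y n) <= INR n * (Q + INR n * y n ^ 2)) by nra.
     apply Rmult_le_reg_l with (INR n); auto. }
 nra. Qed.

Lemma rsum_abs m f : Rabs (rsum m f) <= rsum m (fun k => Rabs (f k)).
Proof. induction m; simpl. rewrite Rabs_R0; lra. eapply Rle_trans. apply Rabs_triang. lra. Qed.

Lemma l1_bound n A x : vnorm n x <= 1 ->
  vnorm n (mat_vec n A x) <= rsum n (fun i => rsum n (fun j => Rabs (A i j))).
Proof. intros Hx. eapply Rle_trans. apply vnorm_le_l1. apply rsum_le; intros i Hi.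
 unfold mat_vec. eapply Rle_trans. apply rsum_abs.
 apply rsum_le; intros j Hj. rewrite Rabs_mult.
 assert (Rabs (x j) <= 1) by (pose proof (coord_le n x j Hj); lra).
 assert (0 <= Rabs (A i j)) by apply Rabs_pos. nra. Qed.

Definition total n (A : mat) := rsum n (fun i => rsum n (fun j => A i j)).

Lemma opnorm_lub n A :
  is_lub (fun r => exists x : vec, vnorm n x <= 1 /\ r = vnorm n (mat_vec n A x)) (opnorm n A).
Proof. unfold opnorm. apply epsilon_spec.
 assert (Hb : bound (fun r => exists x : vec, vnorm n x <= 1 /\ r = vnorm n (mat_vec n A x))).
 { exists (rsum n (fun i => rsum n (fun j => Rabs (A i j)))). intros r [x [Hx ->]].
   apply l1_bound; auto. }
 assert (Hne : exists r, (fun r => exists x : vec, vnorm n x <= 1 /\ r = vnorm n (mat_vec n A x)) r).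
 { exists (vnorm n (mat_vec n A (fun _ => 0))). exists (fun _ => 0). split; auto.
   unfold vnorm. rewrite (rsum_ext _ _ (fun _ => 0)). rewrite rsum_const, Rmult_0_r, sqrt_0. lra.
   intros; simpl; ring. }
 destruct (completeness _ Hb Hne) as [m Hm]. exists m; exact Hm. Qed.

Lemma opnorm_le_total n W : nonneg_mat n W -> opnorm n W <= total n W.
Proof. intros HW. destruct (opnorm_lub n W) as [_ Hl]. apply Hl.
 intros r [x [Hx ->]]. eapply Rle_trans. apply l1_bound; auto.
 unfold total. apply rsum_le; intros i Hi; apply rsum_le; intros j Hj.
 rewrite Rabs_right; [lra|]. apply Rle_ge, HW; auto. Qed.

Lemma total_le_opnorm n M : total n M <= INR n * opnorm n M.
Proof. destruct n as [|n']. { unfold total; simpl; lra. }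
 set (n := S n'). assert (Hn : 0 < INR n) by (apply lt_0_INR; unfold n; lia).
 set (s := sqrt (INR n)). assert (Hs : 0 < s) by (apply sqrt_lt_R0; auto).
 assert (Hss : s * s = INR n) by (apply sqrt_sqrt; lra).
 set (x := fun _ : nat => / s).
 assert (Hx : vnorm n x = 1).
 { unfold vnorm, x. rewrite rsum_const. replace (INR n * (/ s) ^ 2) with 1. apply sqrt_1.
   rewrite <- Hss. field. lra. }
 set (y := mat_vec n M x).
 assert (Hy : rsum n y = total n M / s).
 { unfold y, total, mat_vec, x. unfold Rdiv. rewrite <- rsum_scal_r. apply rsum_ext; intros i _.
   rewrite <- rsum_scal_r. reflexivity. }
 assert (Hcs : rsum n y <= s * vnorm n y).
 { apply Rle_trans with (Rabs (rsum n y)). apply Rle_abs.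
   rewrite <- sqrt_Rsqr_abs. unfold vnorm, s. rewrite <- sqrt_mult_alt by lra.
   apply sqrt_le_1_alt. unfold Rsqr. replace (rsum n y * rsum n y) with (rsum n y ^ 2) by ring.
   apply cauchy_schwarz. }
 assert (Hop : vnorm n y <= opnorm n M).
 { destruct (opnorm_lub n M) as [Hu _]. apply Hu. exists x. split; [lra|reflexivity]. }
 rewrite Hy in Hcs. rewrite <- Hss.
 assert (total n M <= s * s * vnorm n y).
 { apply Rmult_le_compat_r with (r := s) in Hcs; [|lra]. unfold Rdiv in Hcs.
   rewrite Rmult_assoc, Rinv_l, Rmult_1_r in Hcs by lra. nra. }
 nra. Qed.

Lemma sum_words_le l N g h : (forall ks, Forall (fun k => (k < l)%nat) ks -> g ks <= h ks) ->
  sum_words l N g <= sum_words l N h.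
Proof. revert g h; induction N; intros g h H; simpl. apply H; constructor.
 apply rsum_le; intros k Hk. apply IHN. intros ks Hks. apply H. constructor; auto. Qed.

Lemma sum_words_ext l N g h : (forall ks, g ks = h ks) -> sum_words l N g = sum_words l N h.
Proof. revert g h; induction N; intros g h H; simpl. apply H.
 apply rsum_ext; intros k Hk. apply IHN. intros; apply H. Qed.

Lemma sum_words_rsum l N m (f : nat -> list nat -> R) :
  sum_words l N (fun ks => rsum m (fun p => f p ks)) = rsum m (fun p => sum_words l N (f p)).
Proof. revert f; induction N; intros f; simpl. reflexivity.
 rewrite (rsum_ext l _ (fun k => rsum m (fun p => sum_words l N (fun ks => f p (k :: ks))))).
 apply rsum_swap. intros k _. apply (IHN (fun p ks => f p (k :: ks))). Qed.

Lemma sum_words_scal l N c g : sum_words l N (fun ks => c * g ks) = c * sum_words l N g.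
Proof. revert g; induction N; intros g; simpl. reflexivity.
 rewrite <- rsum_scal. apply rsum_ext; intros k _. apply (IHN (fun ks => g (k :: ks))). Qed.

Lemma words_pow n l (F : nat -> mat) E N i j :
  (forall i j, (i < n)%nat -> (j < n)%nat -> rsum l (fun k => F k i j) = mat_id i j) ->
  (i < n)%nat -> (j < n)%nat ->
  sum_words l N (fun ks => word_prod n F E ks i j) = mat_pow n E N i j.
Proof. intros hsum. revert i j; induction N; intros i j Hi Hj; [reflexivity|].
 cbn [sum_words mat_pow]. cbn [word_prod].
 rewrite (rsum_ext l _ (fun k => rsum n (fun m => mat_mul n (F k) E i m * mat_pow n E N m j))).
 2:{ intros k _. unfold mat_mul at 1.
     rewrite (sum_words_rsum l N n (fun m ks => mat_mul n (F k) E i m * word_prod n F E ks m j)).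
     apply rsum_ext; intros m Hm. rewrite (sum_words_scal l N _ (fun ks => word_prod n F E ks m j)).
     rewrite IHN; auto. }
 rewrite rsum_swap.
 change (mat_mul n E (mat_pow n E N) i j) with (rsum n (fun m => E i m * mat_pow n E N m j)).
 apply rsum_ext; intros m Hm.
 rewrite rsum_scal_r. f_equal. rewrite <- (mat_id_l n E i m Hi). unfold mat_mul.
 rewrite rsum_swap. apply rsum_ext; intros p Hp.
 rewrite rsum_scal_r. rewrite hsum; auto. Qed.

Lemma word_nonneg n l F E ks : (forall k, (k < l)%nat -> nonneg_mat n (F k)) -> nonneg_mat n E ->
  Forall (fun k => (k < l)%nat) ks -> nonneg_mat n (word_prod n F E ks).
Proof. intros hF hE Hks. induction Hks; simpl. apply nonneg_id.
 apply nonneg_mul; auto. apply nonneg_mul; auto. Qed.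

Theorem lemma3p4 (n l N : nat) (F : nat -> mat) (R : mat)
  (hF : forall k, (k < l)%nat -> nonneg_mat n (F k))
  (hsum : forall i j, (i < n)%nat -> (j < n)%nat ->
            rsum l (fun k => F k i j) = mat_id i j)
  (hR : nonneg_mat n R)
  (hN : (1 <= N)%nat) :
  sum_words l N
    (fun ks => opnorm n (word_prod n F (mat_exp n (mat_scale (/ INR N) R)) ks))
  <= INR n * opnorm n (mat_exp n R).
Proof.
 set (E := mat_exp n (mat_scale (/ INR N) R)).
 assert (HE : nonneg_mat n E).
 { apply exp_nonneg. intros a b Ha Hb. unfold mat_scale. apply Rmult_le_pos; auto.
   left; apply Rinv_0_lt_compat, lt_0_INR; lia. }
 apply Rle_trans with (sum_words l N (fun ks => total n (word_prod n F E ks))).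
 { apply sum_words_le. intros ks Hks. apply opnorm_le_total, (word_nonneg n l); auto. }
 unfold total. rewrite sum_words_rsum.
 rewrite (rsum_ext n _ (fun i => rsum n (fun j => mat_pow n E N i j))).
 2:{ intros i Hi. rewrite (sum_words_rsum l N n (fun j ks => word_prod n F E ks i j)).
     apply rsum_ext; intros j Hj. apply words_pow; auto. }
 eapply Rle_trans. 2: apply total_le_opnorm. unfold total.
 apply rsum_le; intros i Hi; apply rsum_le; intros j Hj. apply expN_le; auto. Qed.
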